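(* Let $\mathcal D=\{\mathbf D_i:i\in I\}$ be a class of upwards-closed dependency notions, and for each $i\in I$ let $\gamma_i:\mathbb N\to\mathbb N$ be such that $\mathbf D_i$ is $\gamma_i$-bounded. Let $\phi\in\mathbf{FO}(\mathcal D)$ be a formula in which each $\mathbf D_i$ occurs $k_i$ times, and let $\nu_\phi(n)=\sum_{i\in I}k_i\gamma_i(n)$. Then for all finite structures $\mathfrak M$ and all teams $X$: if $\mathfrak M\models_X\phi$, then there exists $Y\subseteq X$ with $|Y|\le\nu_\phi(|M|)$ and $\mathfrak M\models_Y\phi$.
   Context: Team semantics (lax version). For a structure $\mathfrak M$ with domain $M$, a team $X$ is a (possibly empty) set of assignments $s:V\to M$, $V$ a finite set of variables; $X(\vec v)=\{s(\vec v):s\in X\}$. Satisfaction for formulas in negation normal form: first-order literal $\alpha$: every $s\in X$ satisfies $\alpha$ (Tarski); $\psi\vee\theta$: $X=Y\cup Z$ with $\mathfrak M\models_Y\psi$, $\mathfrak M\models_Z\theta$; $\psi\wedge\theta$: both; $\exists v\psi$: some $F:X\to\mathcal P(M)\setminus\{\emptyset\}$ with $\mathfrak M\models_{X[F/v]}\psi$, $X[F/v]=\{s[m/v]:s\in X,m\in F(s)\}$; $\forall v\psi$: $\mathfrak M\models_{X[M/v]}\psi$, $X[M/v]=\{s[m/v]:s\in X,m\in M\}$. A $k$-ary dependency notion $\mathbf D$ is an isomorphism-closed class of structures $(M,R)$, $R$ a $k$-ary relation; the atom $\mathbf D\vec v$ satisfies $\mathfrak M\models_X\mathbf D\vec v$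 iff $(M,X(\vec v))\in\mathbf D$. $\mathbf D$ is upwards-closed if $(M,R)\in\mathbf D$, $R\subseteq S$ imply $(M,S)\in\mathbf D$. For $\gamma:\mathbb N\to\mathbb N$, $\mathbf D$ is $\gamma$-bounded if for all finite structures $\mathfrak M$, teams $X$ and tuples $\vec v$, whenever $\mathfrak M\models_X\mathbf D\vec v$ there is $Y\subseteq X$ with $|Y|\le\gamma(|M|)$ and $\mathfrak M\models_Y\mathbf D\vec v$. $\mathbf{FO}(\mathcal D)$ is first-order logic in negation normal form extended with the atoms $\mathbf D\vec v$ for $\mathbf D\in\mathcal D$. *)

(* Defs.v *)
From mathcomp Require Import all_boot.
From Stdlib Require List.
Set Implicit Arguments.
Unset Strict Implicit.
Unset Printing Implicit Defensive.

Record depnotion (k : nat) := DepNotion {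
  dn_class :> forall M : Type, (k.-tuple M -> Prop) -> Prop;
  dn_iso : forall (M N : Type) (f : M -> N) (R : k.-tuple M -> Prop),
    bijective f ->
    dn_class R -> dn_class (fun t : k.-tuple N => exists t', R t' /\ t = map_tuple f t')
}.

Definition upwards_closed k (D : depnotion k) : Prop :=
  forall (M : Type) (R S : k.-tuple M -> Prop),
    (forall t, R t -> S t) -> D M R -> D M S.

Definition var := nat.

(* Vocabulary: relation symbols and function symbols (constants are
   0-ary function symbols). *)
Record vocab := Vocab { rsym : Type; fsym : Type }.

Inductive term (L : vocab) :=
| TVar of var
| TApp of fsym L & seq (term L).

Inductive literal (L : vocab) :=
| LEq of term L & term L
| LNeq of term L & term L
| LRel of rsym L & seq (term L)
| LNRel of rsym L & seq (term L).

(* Formulas of FO(D) in negation normal form; the dependency atoms are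
   indexed by i : I, where D_i has arity ar i. *)
Inductive formula (L : vocab) (I : Type) (ar : I -> nat) :=
| FLit of literal L
| FDep (i : I) of (ar i).-tuple var
| FOr of formula L ar & formula L ar
| FAnd of formula L ar & formula L ar
| FEx of var & formula L ar
| FAll of var & formula L ar.

Record structure (L : vocab) := Structure {
  dom :> finType;
  rel_interp : rsym L -> seq dom -> Prop;
  fun_interp : fsym L -> seq dom -> dom
}.

(* An assignment s : V -> M with V a finite set of variables, represented
   as a partial function (defined exactly on V). *)
Definition assignment (M : Type) := var -> option M.

Definition upd M (s : assignment M) (v : var) (m : M) : assignment M :=
  fun w => if w == v then Some m else s w.

Definition team (M : Type) := assignment M -> Prop.

Definition team_on (M : Type) (V : seq var) (X : team M) : Prop :=
  forall s, X s -> forall w, isSome (s w) = (w \in V).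

Definition subteam M (Y X : team M) : Prop := forall s, Y s -> X s.

Definition card_le M (Y : team M) (n : nat) : Prop :=
  exists l : seq (assignment M), (forall s, Y s -> List.In s l) /\ size l <= n.

Definition team_rel M k (X : team M) (vs : k.-tuple var) : k.-tuple M -> Prop :=
  fun t => exists s, X s /\ [seq s v | v <- vs] = [seq Some x | x <- t].

Fixpoint all_some M (l : seq (option M)) : option (seq M) :=
  match l with
  | [::] => Some [::]
  | o :: l' => match o, all_some l' with
               | Some x, Some xs => Some (x :: xs)
               | _, _ => None
               end
  end.

Section Eval.
Variables (L : vocab) (A : structure L) (s : assignment A).

Fixpoint eval_term (t : term L) : option A :=
  match t with
  | TVar v => s v
  | TApp f ts => omap (fun_interp f) (all_some (map eval_term ts))
  end.

Definition sat_lit (l : literal L) : Prop :=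
  match l with
  | LEq t1 t2 => exists a, eval_term t1 = Some a /\ eval_term t2 = Some a
  | LNeq t1 t2 => exists a b, eval_term t1 = Some a /\ eval_term t2 = Some b /\ a <> b
  | LRel R ts => exists xs, all_some (map eval_term ts) = Some xs /\ rel_interp R xs
  | LNRel R ts => exists xs, all_some (map eval_term ts) = Some xs /\ ~ rel_interp R xs
  end.
End Eval.

(* Lax team semantics *)
Fixpoint sat (L : vocab) (I : Type) (ar : I -> nat) (D : forall i, depnotion (ar i))
    (A : structure L) (X : team A) (phi : formula L ar) : Prop :=
  match phi with
  | FLit l => forall s, X s -> sat_lit s l
  | FDep i vs => D i A (team_rel X vs)
  | FOr p q => exists Y Z : team A,
      (forall s, X s <-> Y s \/ Z s) /\ sat D Y p /\ sat D Z q
  | FAnd p q => sat D X p /\ sat D X q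
  | FEx v p => exists F : assignment A -> A -> Prop,
      (forall s, X s -> exists m, F s m) /\
      sat D (fun s' => exists s m, X s /\ F s m /\ s' = upd s v m) p
  | FAll v p => sat D (fun s' => exists s m, X s /\ s' = upd s v m) p
  end.

Definition bounded k (D : depnotion k) (gamma : nat -> nat) : Prop :=
  forall (M : finType) (V : seq var) (X : team M) (vs : k.-tuple var),
    0 < #|M| -> team_on V X ->
    D M (team_rel X vs) ->
    exists Y : team M, subteam Y X /\ card_le Y (gamma #|M|) /\ D M (team_rel Y vs).

(* nu_phi(n) = sum_i k_i * gamma_i(n), k_i = number of occurrences of D_i
   in phi; computed as the sum of gamma_i(n) over the occurrences. *)
Fixpoint nu (L : vocab) (I : Type) (ar : I -> nat) (gamma : I -> nat -> nat)
    (phi : formula L ar) (n : nat) : nat :=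
  match phi with
  | FLit _ => 0
  | FDep i _ => gamma i n
  | FOr p q | FAnd p q => nu gamma p n + nu gamma q n
  | FEx _ p | FAll _ p => nu gamma p n
  end.

(* Main.v *)
Require Import Defs.
From Stdlib Require Import ClassicalEpsilon Classical.
From mathcomp Require Import all_boot.

Section Proof.
Variables (L : vocab) (I : Type) (ar : I -> nat)
  (D : forall i, depnotion (ar i)) (gamma : I -> nat -> nat)
  (Hup : forall i, upwards_closed (D i))
  (Hbd : forall i, bounded (D i) (gamma i)) (A : structure L).

Lemma team_on_sub V (X Y : team A) : team_on V X -> subteam Y X -> team_on V Y.
Proof. move=> H S s Ys; exact: H (S _ Ys). Qed.

Lemma team_on_upd V (X : team A) v (P : assignment A -> A -> Prop) :
  team_on V X -> team_on (v :: V) (fun s' => exists s m, X s /\ P s m /\ s' = upd s v m).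
Proof.
move=> H s' [s [m [Xs [_ ->]]]] w; rewrite /upd in_cons.
by case: (w == v) => //=; apply: H.
Qed.

Definition src (P : assignment A -> assignment A -> Prop) (s' : assignment A) :=
  epsilon (inhabits (fun _ => None)) (P s').

Lemma src_spec P s' : (exists s, P s' s) -> P s' (src P s').
Proof. exact: epsilon_spec. Qed.

Lemma card_le_src (Y' : team A) n P :
  card_le Y' n -> card_le (fun s => exists s', Y' s' /\ s = src P s') n.
Proof.
move=> [l [Hl Hs]]; exists (map (src P) l); split; last by rewrite size_map.
move=> s [s' [Ys ->]]; apply: List.in_map; exact: Hl.
Qed.

Lemma strong (phi : formula L ar) : forall V (X : team A),
  0 < #|dom A| -> team_on V X -> sat D X phi ->
  exists Y : team A, subteam Y X /\ card_le Y (nu gamma phi #|dom A|) /\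
    forall W, subteam Y W -> subteam W X -> sat D W phi.
Proof.
elim: phi => [l|i vs|p IHp q IHq|p IHp q IHq|v p IHp|v p IHp] V X H0 Hon /=.
- move=> Hs; exists (fun _ => False); split=> //; split; first by exists [::].
  by move=> W _ WX s Ws; apply: Hs; apply: WX.
- move=> HD; have [Y [YX [Yc YD]]] := Hbd i _ _ _ _ H0 Hon HD.
  exists Y; split=> //; split=> // W YW WX.
  apply: (Hup i _ _ _ _ YD) => t [s [Ys E]]; exists s; split=> //; exact: YW.
- move=> [Y [Z [HX [HY HZ]]]].
  have HYon : team_on V Y by apply: team_on_sub Hon _ => s Ys; apply/HX; left.
  have HZon : team_on V Z by apply: team_on_sub Hon _ => s Zs; apply/HX; right.
  have [Y1 [Y1Y [Y1c Y1W]]] := IHp _ _ H0 HYon HY.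
  have [Z1 [Z1Z [Z1c Z1W]]] := IHq _ _ H0 HZon HZ.
  exists (fun s => Y1 s \/ Z1 s); split.
    by move=> s [/Y1Y|/Z1Z] ?; apply/HX; [left|right].
  split.
    case: Y1c => [l1 [H1 S1]]; case: Z1c => [l2 [H2 S2]].
    exists (l1 ++ l2); split; last by rewrite size_cat leq_add.
    by move=> s [/H1|/H2] ?; apply: List.in_or_app; [left|right].
  move=> W YW WX; exists (fun s => W s /\ Y s), (fun s => W s /\ Z s); split.
    move=> s; split; last by case=> -[].
    by move=> Ws; case/HX: (WX _ Ws) => ?; [left|right].
  split; [apply: Y1W | apply: Z1W].
  + by move=> s Ys; split; [apply: YW; left|apply: Y1Y].
  + by move=> s [].
  + by move=> s Zs; split; [apply: YW; right|apply: Z1Z].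
  + by move=> s [].
- move=> [HP HQ].
  have [Y1 [Y1X [Y1c Y1W]]] := IHp _ _ H0 Hon HP.
  have [Z1 [Z1X [Z1c Z1W]]] := IHq _ _ H0 Hon HQ.
  exists (fun s => Y1 s \/ Z1 s); split.
    by move=> s [/Y1X|/Z1X].
  split.
    case: Y1c => [l1 [H1 S1]]; case: Z1c => [l2 [H2 S2]].
    exists (l1 ++ l2); split; last by rewrite size_cat leq_add.
    by move=> s [/H1|/H2] ?; apply: List.in_or_app; [left|right].
  move=> W YW WX; split; [apply: Y1W|apply: Z1W] => // s ? ; apply: YW; by [left|right].
- move=> [F [HF HS]].
  have [Y' [Y'X [Y'c Y'W]]] := IHp _ _ H0 (@team_on_upd V X v F Hon) HS.
  pose P := fun s' s => X s /\ exists m, F s m /\ s' = upd s v m.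
  pose Y := fun s => exists s', Y' s' /\ s = src P s'.
  have srcP : forall s', Y' s' -> P s' (src P s').
    move=> s' /Y'X [s [m [Xs [Fm E]]]]; apply: src_spec; exists s; split=> //.
    by exists m.
  exists Y; split.
    by move=> s [s' [Ys ->]]; case: (srcP _ Ys).
  split; first exact: card_le_src.
  move=> W YW WX.
  exists (fun s m => F s m /\ (Y' (upd s v m) \/ ~ Y s)); split.
    move=> s Ws; case: (classic (Y s)) => Hy.
      case: (Hy) => s' [Ys' E]; case: (srcP _ Ys') => _ [m [Fm E']].
      rewrite E; exists m; split; first exact: Fm. left; by rewrite -E'.
    have [m Fm] := HF _ (WX _ Ws); exists m; split=> //; by right.
  apply: Y'W.
    move=> s' Ys'; case: (srcP _ Ys') => _ [m [Fm E]].
    exists (src P s'), m; split; first by apply: YW; exists s'.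
    split=> //; split=> //; left; by rewrite -E.
  move=> s' [s [m [Ws [[Fm _] ->]]]]; exists s, m; split=> //; exact: WX.
- move=> HS.
  have Hon' : team_on (v :: V) (fun s' => exists s m, X s /\ s' = upd s v m).
    move=> s' [s [m [Xs ->]]] w; rewrite /upd in_cons.
    by case: (w == v) => //=; apply: Hon.
  have [Y' [Y'X [Y'c Y'W]]] := IHp _ _ H0 Hon' HS.
  + pose P := fun s' s => X s /\ exists m, s' = upd s v m.
    pose Y := fun s => exists s', Y' s' /\ s = src P s'.
    have srcP : forall s', Y' s' -> P s' (src P s').
      move=> s' /Y'X [s [m [Xs E]]]; apply: src_spec; exists s; split=> //.
      by exists m.
    exists Y; split.
      by move=> s [s' [Ys ->]]; case: (srcP _ Ys).
    split; first exact: card_le_src.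
    move=> W YW WX; apply: Y'W.
      move=> s' Ys'; case: (srcP _ Ys') => _ [m E].
      by exists (src P s'), m; split=> //; apply: YW; exists s'.
    by move=> s' [s [m [Ws ->]]]; exists s, m; split=> //; apply: WX.
Qed.
End Proof.

Theorem mainTheorem7 (L : vocab) (I : Type) (ar : I -> nat)
  (D : forall i, depnotion (ar i)) (gamma : I -> nat -> nat)
  (Hup : forall i, upwards_closed (D i))
  (Hbd : forall i, bounded (D i) (gamma i))
  (phi : formula L ar) (A : structure L) (V : seq var) (X : team A) :
  0 < #|dom A| -> team_on V X ->
  sat D X phi ->
  exists Y : team A, subteam Y X /\ card_le Y (nu gamma phi #|dom A|) /\ sat D Y phi.
Proof.
move=> H0 Hon HS.
have [Y [YX [Yc YW]]] := @strong L I ar D gamma Hup Hbd A phi V X H0 Hon HS.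
by exists Y; split=> //; split=> //; apply: YW.
Qed.
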